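(* Consider the planar ODE system $$\frac{du}{dt}=a_1u-b_1u^2-c_1uv,\qquad \frac{dv}{dt}=\frac{a_2v}{1+ku}-b_2v^2-c_2uv,$$ with positive parameters $a_1,a_2,b_1,b_2,c_1,c_2$ and fear coefficient $k\ge 0$. Suppose that for $k=0$ the system is in the weak competition setting, i.e. $\frac{c_2}{b_1}<\frac{a_2}{a_1}<\frac{b_2}{c_1}$ and $b_1b_2-c_1c_2>0$, and moreover $b_2b_1>2c_1c_2$. Then for every fear coefficient $k$ with $$k>k_c=\frac{1}{a_1^2c_2}\left(b_1^2a_2-a_1c_2b_1\right),$$ the equilibrium $(\frac{a_1}{b_1},0)$ is globally asymptotically stable (i.e. $u$ competitively excludes $v$).
   Context: $u,v\ge 0$ are population densities of two competing species; $v$ is ''fearful'' of $u$, modeled by the factor $\frac{1}{1+ku}$ in the growth rate of $v$. Global asymptotic stability refers to solutions with positive initial data. *)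

(* Defs.v *)
From Stdlib Require Import Reals.
From Coquelicot Require Import Coquelicot.
Open Scope R_scope.

Definition f_u (a1 b1 c1 : R) (u v : R) : R := a1 * u - b1 * u ^ 2 - c1 * u * v.
Definition f_v (a2 b2 c2 k : R) (u v : R) : R :=
  a2 * v / (1 + k * u) - b2 * v ^ 2 - c2 * u * v.

Definition is_solution (a1 a2 b1 b2 c1 c2 k : R) (u v : R -> R) : Prop :=
  forall t, 0 <= t ->
    is_derive u t (f_u a1 b1 c1 (u t) (v t)) /\
    is_derive v t (f_v a2 b2 c2 k (u t) (v t)).

Definition dist2 (x1 y1 x2 y2 : R) : R := sqrt ((x1 - x2) ^ 2 + (y1 - y2) ^ 2).

Definition GAS (a1 a2 b1 b2 c1 c2 k : R) (ue ve : R) : Prop :=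
  (forall eps, 0 < eps -> exists delta, 0 < delta /\
     forall u v, is_solution a1 a2 b1 b2 c1 c2 k u v ->
       0 < u 0 -> 0 < v 0 -> dist2 (u 0) (v 0) ue ve < delta ->
       forall t, 0 <= t -> dist2 (u t) (v t) ue ve < eps)
  /\
  (forall u v, is_solution a1 a2 b1 b2 c1 c2 k u v ->
     0 < u 0 -> 0 < v 0 ->
     is_lim u p_infty ue /\ is_lim v p_infty ve).

(* Main.v *)
Require Import Defs.
From Stdlib Require Import Reals Lra Psatz.
From Coquelicot Require Import Coquelicot.
Open Scope R_scope.

Lemma deriv_cont_pt f t df : is_derive f t df -> continuity_pt f t.
Proof.
  intro H. apply continuity_pt_filterlim.
  apply (ex_derive_continuous f t). exists df; exact H.
Qed.

Lemma nonincr (f df : R -> R) a b : a <= b ->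
  (forall t, a <= t <= b -> is_derive f t (df t)) ->
  (forall t, a <= t <= b -> df t <= 0) -> f b <= f a.
Proof.
  intros Hab Hd Hn.
  destruct (MVT_gen f a b df) as [c [Hc Heq]].
  - intros x Hx. rewrite Rmin_left in Hx by lra. rewrite Rmax_right in Hx by lra.
    apply Hd; lra.
  - intros x Hx. rewrite Rmin_left in Hx by lra. rewrite Rmax_right in Hx by lra.
    apply (deriv_cont_pt f x (df x)). apply Hd; lra.
  - rewrite Rmin_left in Hc by lra. rewrite Rmax_right in Hc by lra.
    assert (df c <= 0) by (apply Hn; lra). nra.
Qed.

Definition mpos (s : R) := (s + Rabs s) / 2.

Lemma mpos_cont s : continuity_pt mpos s.
Proof.
  unfold mpos. apply continuity_pt_div.
  - apply continuity_pt_plus. apply derivable_continuous_pt, derivable_pt_id.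
    apply Rcontinuity_abs.
  - apply continuity_pt_const. intros x y; reflexivity.
  - lra.
Qed.

Lemma mpos_id s : 0 <= s -> mpos s = s.
Proof. intro. unfold mpos. rewrite Rabs_pos_eq; lra. Qed.

Lemma mpos_nn s : 0 <= mpos s.
Proof. unfold mpos. destruct (Rle_dec 0 s). rewrite Rabs_pos_eq; lra.
  rewrite Rabs_left; lra. Qed.

Lemma pos_lemma (y G : R -> R) :
  (forall t, 0 <= t -> is_derive y t (y t * G t)) ->
  (forall t, 0 <= t -> continuity_pt G t) -> 0 < y 0 ->
  forall t, 0 <= t -> 0 < y t.
Proof.
  intros Hd Hc Hy0.
  set (g := fun s => G (mpos s)).
  assert (Hgc : forall s, continuous g s).
  { intro s. apply continuity_pt_filterlim.
    change (continuity_pt (comp G mpos) s).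
    apply continuity_pt_comp. apply mpos_cont. apply Hc, mpos_nn. }
  set (I := fun t => RInt g 0 t).
  assert (HI : forall t, is_derive I t (g t)).
  { intro t. apply (is_derive_RInt g I 0 t).
    - apply filter_forall. intro b. unfold I. apply (RInt_correct g 0 b).
      apply ex_RInt_continuous. intros; apply Hgc.
    - apply Hgc. }
  set (w := fun t => y t * exp (- I t)).
  assert (Hw : forall t, 0 <= t -> is_derive w t 0).
  { intros t Ht.
    assert (He : is_derive (fun s => exp (- I s)) t (exp (- I t) * (- g t))).
    { assert (H1 := is_derive_comp exp (fun s => - I s) t (exp (- I t)) (- g t)
         (is_derive_exp _) (is_derive_opp _ _ _ (HI t))).
      simpl in H1. unfold scal in H1; simpl in H1; unfold mult in H1; simpl in H1.
      replace (exp (- I t) * - g t) with (- g t * exp (- I t)) by ring. exact H1. }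
    assert (H2 := is_derive_mult y (fun s => exp (- I s)) t _ _ (Hd t Ht) He).
    unfold w. 
    replace 0 with (plus (mult (y t * G t) (exp (- I t))) (mult (y t) (exp (- I t) * - g t))).
    apply H2. intros; apply Rmult_comm.
    unfold plus, mult; simpl. unfold g. rewrite mpos_id by lra. ring. }
  intros t Ht.
  assert (Hwt : w t = w 0).
  { assert (A := nonincr w (fun _ => 0) 0 t Ht (fun s Hs => Hw s (proj1 Hs)) (fun _ _ => Rle_refl 0)).
    assert (B := nonincr (fun s => - w s) (fun _ => - 0) 0 t Ht
      (fun s Hs => is_derive_opp _ _ _ (Hw s (proj1 Hs))) (fun _ _ => ltac:(lra))).
    simpl in B. lra. }
  unfold w in Hwt.
  assert (0 < y 0 * exp (- I 0)) by (apply Rmult_lt_0_compat; [lra | apply exp_pos]).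
  assert (0 < exp (- I t)) by apply exp_pos.
  destruct (Rlt_le_dec 0 (y t)) as [|Hn]; auto. nra.
Qed.

Lemma h_le (a2 c2 k us u : R) : 0 < a2 -> 0 < c2 -> 0 <= k -> 0 < us -> 0 < u -> u <= us ->
  a2 <= c2 * us * (1 + k * us) ->
  a2 / (1 + k * u) - c2 * u <= a2 / us * (us - u).
Proof.
  intros Ha2 Hc2 Hk Hus Hu Huus Hcond. set (r := a2 / (1 + k * u)).
  assert (Hr : r * (1 + k * u) = a2) by (unfold r; field; nra).
  assert (Hr0 : 0 < r) by (unfold r; apply Rdiv_lt_0_compat; nra).
  assert (E : a2 / us * (us - u) = a2 - a2 * u / us) by (field; lra).
  rewrite E.
  assert (H1 : r * (1 + k * us) <= a2 * (1 + k * us) - a2 * u * k).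
  {
    apply (Rmult_le_reg_r (1 + k * u)). nra.
    replace (r * (1 + k * us) * (1 + k * u)) with (a2 * (1 + k * us)) by (rewrite <- Hr; ring).
    assert (0 <= a2 * (k * k) * u * (us - u)) by (repeat apply Rmult_le_pos; nra).
    nra. }
  assert (H2 : a2 * u / us * us = a2 * u) by (field; lra).
  apply (Rmult_le_reg_r (us * (1 + k * us))). nra.
  replace ((a2 - a2 * u / us) * (us * (1 + k * us))) with
    (a2 * us * (1 + k * us) - a2 * u * (1 + k * us)) by (field; lra).
  nra.
Qed.

Lemma h_neg (a2 c2 k us u : R) : 0 < a2 -> 0 < c2 -> 0 <= k -> 0 < us -> us <= u ->
  a2 <= c2 * us * (1 + k * us) ->
  a2 / (1 + k * u) - c2 * u <= 0.
Proof.
  intros Ha2 Hc2 Hk Hus Huus Hcond. assert (a2 / (1 + k * u) <= a2 / (1 + k * us)).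
  { apply Rmult_le_compat_l. lra. apply Rinv_le_contravar; nra. }
  assert (a2 / (1 + k * us) <= c2 * us).
  { apply (Rmult_le_reg_r (1 + k * us)). nra. unfold Rdiv. rewrite Rmult_assoc, Rinv_l by nra. nra. }
  nra.
Qed.

Lemma quad (y z rho : R) : 1 < rho ->
  - y ^ 2 + 2 * y * z - rho * z ^ 2 <= - ((rho - 1) / (2 * (rho + 1))) * (y ^ 2 + z ^ 2).
Proof.
  intros. set (s := (rho - 1) / (2 * (rho + 1))).
  assert (Hs0 : 0 < s) by (unfold s; apply Rdiv_lt_0_compat; lra).
  assert (Hs1 : s < 1/2) by (unfold s; apply (Rmult_lt_reg_r (2 * (rho + 1))); [lra|]; field_simplify; lra).
  assert (Hss : s * (2 * (rho + 1)) = rho - 1) by (unfold s; field; lra).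
  assert (Hd : 1 <= (1 - s) * (rho - s)) by nra.
  assert (0 <= (1 - s) * ((1 - s) * y ^ 2 - 2 * y * z + (rho - s) * z ^ 2)).
  { replace ((1 - s) * ((1 - s) * y ^ 2 - 2 * y * z + (rho - s) * z ^ 2)) with
      (((1 - s) * y - z) ^ 2 + ((1 - s) * (rho - s) - 1) * z ^ 2) by ring.
    assert (0 <= ((1 - s) * y - z) ^ 2) by apply pow2_ge_0.
    assert (0 <= ((1 - s) * (rho - s) - 1) * z ^ 2) by (apply Rmult_le_pos; [lra | apply pow2_ge_0]).
    lra. }
  assert (0 <= (1 - s) * y ^ 2 - 2 * y * z + (rho - s) * z ^ 2).
  { apply (Rmult_le_reg_l (1 - s)). lra. lra. }
  nra.
Qed.

Definition rho a1 a2 b2 c1 := a1 * b2 / (a2 * c1).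
Definition sig a1 a2 b2 c1 := (rho a1 a2 b2 c1 - 1) / (2 * (rho a1 a2 b2 c1 + 1)).
Definition alc a1 a2 b1 c1 := c1 * a1 / (a2 * b1).

Lemma sig_bounds a1 a2 b2 c1 : 0 < a1 -> 0 < a2 -> 0 < b2 -> 0 < c1 -> a2 * c1 < a1 * b2 ->
  1 < rho a1 a2 b2 c1 /\ 0 < sig a1 a2 b2 c1 /\ sig a1 a2 b2 c1 < 1/2.
Proof.
  intros. assert (Hr : 1 < rho a1 a2 b2 c1).
  { unfold rho. apply (Rmult_lt_reg_r (a2 * c1)). nra.
    unfold Rdiv. rewrite Rmult_assoc, Rinv_l by nra. lra. }
  split; auto. unfold sig. set (r := rho a1 a2 b2 c1) in *. split.
  apply Rdiv_lt_0_compat; lra.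
  apply (Rmult_lt_reg_r (2 * (r + 1))). lra.
  unfold Rdiv. rewrite Rmult_assoc, Rinv_l by lra. lra.
Qed.

Lemma key a1 a2 b1 b2 c1 c2 k u v :
  0 < a1 -> 0 < a2 -> 0 < b1 -> 0 < b2 -> 0 < c1 -> 0 < c2 -> 0 <= k ->
  a2 * c1 < a1 * b2 -> a2 <= c2 * (a1 / b1) * (1 + k * (a1 / b1)) ->
  0 < u -> 0 < v ->
  (u - a1 / b1) * (a1 - b1 * u - c1 * v)
   + alc a1 a2 b1 c1 * (a2 * v / (1 + k * u) - b2 * v ^ 2 - c2 * u * v)
  <= - (b1 * sig a1 a2 b2 c1 * (u - a1 / b1) ^ 2 + sig a1 a2 b2 c1 * c1 ^ 2 / b1 * v ^ 2).
Proof.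
  intros Ha1 Ha2 Hb1 Hb2 Hc1 Hc2 Hk Hw Hkc Hu Hv.
  destruct (sig_bounds a1 a2 b2 c1) as [Hr [Hs0 Hs1]]; auto.
  set (us := a1 / b1) in *. set (al := alc a1 a2 b1 c1).
  set (s := sig a1 a2 b2 c1) in *. set (r := rho a1 a2 b2 c1) in *.
  assert (Hus : 0 < us) by (unfold us; apply Rdiv_lt_0_compat; lra).
  assert (Hal : 0 < al) by (unfold al, alc; apply Rdiv_lt_0_compat; nra).
  assert (Ha1e : a1 = b1 * us) by (unfold us; field; lra).
  assert (Halb2 : al * b2 = c1 ^ 2 * r / b1) by (unfold al, alc, r, rho; field; lra).
  set (hu := a2 / (1 + k * u) - c2 * u).
  assert (E : (u - us) * (a1 - b1 * u - c1 * v)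
   + al * (a2 * v / (1 + k * u) - b2 * v ^ 2 - c2 * u * v)
   = - b1 * (u - us) ^ 2 - c1 * v * (u - us) + al * v * hu - al * b2 * v ^ 2).
  { unfold hu. rewrite Ha1e. field. nra. }
  rewrite E.
  destruct (Rle_dec u us) as [Hle | Hgt].
  - assert (Hh := h_le a2 c2 k us u Ha2 Hc2 Hk Hus Hu Hle Hkc). fold hu in Hh.
    assert (Hc : al * (a2 / us) = c1) by (unfold al, alc, us; field; lra).
    assert (al * v * hu <= c1 * v * (us - u)).
    { rewrite <- Hc. replace (al * (a2 / us) * v * (us - u)) with (al * v * (a2 / us * (us - u))) by ring.
      apply Rmult_le_compat_l. nra. exact Hh. }
    assert (Q := quad (us - u) (c1 * v / b1) r Hr). replace ((r - 1) / (2 * (r + 1))) with s in Q by reflexivity.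
    assert (Q2 : b1 * (- (us - u) ^ 2 + 2 * (us - u) * (c1 * v / b1) - r * (c1 * v / b1) ^ 2)
                 <= b1 * (- s * ((us - u) ^ 2 + (c1 * v / b1) ^ 2))).
    { apply Rmult_le_compat_l; lra. }
    replace (b1 * (- (us - u) ^ 2 + 2 * (us - u) * (c1 * v / b1) - r * (c1 * v / b1) ^ 2))
      with (- b1 * (u - us) ^ 2 - c1 * v * (u - us) + c1 * v * (us - u) - al * b2 * v ^ 2) in Q2
      by (rewrite Halb2; field; lra).
    replace (b1 * (- s * ((us - u) ^ 2 + (c1 * v / b1) ^ 2))) with
      (- (b1 * s * (u - us) ^ 2 + s * c1 ^ 2 / b1 * v ^ 2)) in Q2 by (field; lra).
    lra.
  - assert (Hh := h_neg a2 c2 k us u Ha2 Hc2 Hk Hus ltac:(lra) Hkc). fold hu in Hh.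
    assert (al * v * hu <= 0).
    { assert (0 <= al * v) by nra. nra. }
    assert (0 <= c1 * v * (u - us)) by (apply Rmult_le_pos; nra).
    assert (b1 * s * (u - us) ^ 2 <= b1 * (u - us) ^ 2).
    { apply Rmult_le_compat_r. apply pow2_ge_0. nra. }
    assert (s * c1 ^ 2 / b1 * v ^ 2 <= al * b2 * v ^ 2).
    { apply Rmult_le_compat_r. apply pow2_ge_0. rewrite Halb2.
      unfold Rdiv. apply Rmult_le_compat_r. left; apply Rinv_0_lt_compat; lra.
      assert (0 < c1 ^ 2) by nra. nra. }
    lra.
Qed.

Definition Fv us u := u - us - us * (ln u - ln us).

Lemma ln_le_m1 x : 0 < x -> ln x <= x - 1.
Proof. intro. assert (H1 := exp_ineq1_le (ln x)). rewrite exp_ln in H1 by lra. lra. Qed.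

Lemma ln_div x y : 0 < x -> 0 < y -> ln (x / y) = ln x - ln y.
Proof. intros. unfold Rdiv. rewrite ln_mult, ln_Rinv; try lra. apply Rinv_0_lt_compat; lra. Qed.

Lemma F_upper us u : 0 < us -> 0 < u -> Fv us u <= (u - us) ^ 2 / u.
Proof.
  intros. unfold Fv.
  assert (H1 : ln us - ln u <= us / u - 1).
  { rewrite <- ln_div by lra. apply ln_le_m1. apply Rdiv_lt_0_compat; lra. }
  assert (E : (u - us) ^ 2 / u = u - us + us * (us / u - 1)) by (field; lra).
  rewrite E. nra.
Qed.

Lemma F_lower us u : 0 < us -> 0 < u -> (sqrt u - sqrt us) ^ 2 <= Fv us u.
Proof.
  intros. unfold Fv.
  assert (Ha := sqrt_lt_R0 u H0). assert (Hb := sqrt_lt_R0 us H).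
  assert (Hu : sqrt u * sqrt u = u) by (apply sqrt_sqrt; lra).
  assert (Hus : sqrt us * sqrt us = us) by (apply sqrt_sqrt; lra).
  assert (E : ln u - ln us = 2 * ln (sqrt u / sqrt us)).
  { rewrite ln_div by lra. rewrite <- Hu at 1. rewrite <- Hus at 1.
    rewrite !ln_mult by lra. ring. }
  assert (L : ln (sqrt u / sqrt us) <= sqrt u / sqrt us - 1).
  { apply ln_le_m1. apply Rdiv_lt_0_compat; lra. }
  assert (E2 : us * (sqrt u / sqrt us - 1) = sqrt u * sqrt us - us).
  { transitivity (sqrt us * sqrt us * (sqrt u / sqrt us - 1)). rewrite Hus; ring.
    transitivity (sqrt u * sqrt us - sqrt us * sqrt us). field; lra. rewrite Hus; ring. }
  rewrite E.
  assert (us * (2 * ln (sqrt u / sqrt us)) <= 2 * (sqrt u * sqrt us - us)).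
  { rewrite <- E2. nra. }
  nra.
Qed.

Lemma F_nonneg us u : 0 < us -> 0 < u -> 0 <= Fv us u.
Proof. intros. eapply Rle_trans. apply pow2_ge_0. apply F_lower; auto. Qed.
Definition theta us eps := Rmin 1 (eps / (2 * (2 * sqrt us + 1))).
Definition etaf us al eps := Rmin (theta us eps ^ 2) (al * eps / 2).

Lemma theta_pos us eps : 0 < us -> 0 < eps -> 0 < theta us eps.
Proof.
  intros. unfold theta. assert (0 < sqrt us) by (apply sqrt_lt_R0; lra).
  apply Rmin_pos. lra. apply Rdiv_lt_0_compat; lra.
Qed.

Lemma etaf_pos us al eps : 0 < us -> 0 < al -> 0 < eps -> 0 < etaf us al eps.
Proof.
  intros. unfold etaf. assert (H2 := theta_pos us eps H H1).
  apply Rmin_pos. nra. nra.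
Qed.

Lemma smallV us al eps u v : 0 < us -> 0 < al -> 0 < eps -> 0 < u -> 0 < v ->
  Fv us u + al * v < etaf us al eps -> Rabs (u - us) < eps / 2 /\ v < eps / 2.
Proof.
  intros Hus Hal He Hu Hv H.
  assert (HF := F_lower us u Hus Hu).
  assert (Hth := theta_pos us eps Hus He).
  assert (Hsq := sqrt_lt_R0 us Hus). assert (Hsu := sqrt_lt_R0 u Hu).
  assert (E1 := Rmin_l (theta us eps ^ 2) (al * eps / 2)).
  assert (E2 := Rmin_r (theta us eps ^ 2) (al * eps / 2)).
  fold (etaf us al eps) in E1, E2.
  assert (0 <= (sqrt u - sqrt us) ^ 2) by apply pow2_ge_0.
  split.
  - set (d := sqrt u - sqrt us) in *. set (th := theta us eps) in *.
    assert (Hd2 : d ^ 2 < th ^ 2) by nra.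
    assert (Hd : Rabs d < th).
    { apply Rabs_def1; nra. }
    assert (Eu : u - us = d * (sqrt u + sqrt us)).
    { unfold d. rewrite <- (sqrt_sqrt u) at 1 by lra. rewrite <- (sqrt_sqrt us) at 1 by lra. ring. }
    rewrite Eu, Rabs_mult, (Rabs_pos_eq (sqrt u + sqrt us)) by lra.
    assert (Hth1 : th <= 1) by apply Rmin_l.
    assert (Hth2 : th <= eps / (2 * (2 * sqrt us + 1))) by apply Rmin_r.
    assert (Hsu' : sqrt u <= sqrt us + th).
    { assert (d <= Rabs d) by apply Rle_abs. unfold d in *. lra. }
    assert (Hx : th * (2 * sqrt us + 1) <= eps / 2).
    { apply (Rmult_le_compat_r (2 * sqrt us + 1)) in Hth2; [|lra].
      replace (eps / (2 * (2 * sqrt us + 1)) * (2 * sqrt us + 1)) with (eps / 2) in Hth2 by (field; lra).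
      exact Hth2. }
    assert (0 <= Rabs d) by apply Rabs_pos.
    assert (Rabs d * (sqrt u + sqrt us) <= Rabs d * (2 * sqrt us + 1)).
    { apply Rmult_le_compat_l; lra. }
    assert (Rabs d * (2 * sqrt us + 1) < th * (2 * sqrt us + 1)).
    { apply Rmult_lt_compat_r; lra. }
    lra.
  - assert (al * v < al * eps / 2) by nra.
    nra.
Qed.

Definition ccf us al p q eta := Rmin (q * (eta / (2 * al)) ^ 2) (p * Rmin (us ^ 2 / 4) (us * eta / 4)).

Lemma ccf_pos us al p q eta : 0 < us -> 0 < al -> 0 < p -> 0 < q -> 0 < eta -> 0 < ccf us al p q eta.
Proof.
  intros. unfold ccf. apply Rmin_pos.
  assert (0 < eta / (2 * al)) by (apply Rdiv_lt_0_compat; lra).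
  apply Rmult_lt_0_compat; auto. apply pow_lt; lra.
  apply Rmult_lt_0_compat; auto. apply Rmin_pos; nra.
Qed.

Lemma decrease us al p q eta u v : 0 < us -> 0 < al -> 0 < p -> 0 < q -> 0 < eta -> 0 < u -> 0 < v ->
  eta <= Fv us u + al * v -> ccf us al p q eta <= p * (u - us) ^ 2 + q * v ^ 2.
Proof.
  intros Hus Hal Hp Hq He Hu Hv H.
  assert (C1 := Rmin_l (q * (eta / (2 * al)) ^ 2) (p * Rmin (us ^ 2 / 4) (us * eta / 4))).
  assert (C2 := Rmin_r (q * (eta / (2 * al)) ^ 2) (p * Rmin (us ^ 2 / 4) (us * eta / 4))).
  fold (ccf us al p q eta) in C1, C2.
  assert (M1 := Rmin_l (us ^ 2 / 4) (us * eta / 4)).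
  assert (M2 := Rmin_r (us ^ 2 / 4) (us * eta / 4)).
  assert (0 <= p * (u - us) ^ 2) by (apply Rmult_le_pos; [lra | apply pow2_ge_0]).
  assert (0 <= q * v ^ 2) by (apply Rmult_le_pos; [lra | apply pow2_ge_0]).
  destruct (Rle_dec (eta / 2) (al * v)) as [Hv2 | Hv2].
  - assert (Hv3 : eta / (2 * al) <= v).
    { apply (Rmult_le_reg_l al). lra. replace (al * (eta / (2 * al))) with (eta / 2) by (field; lra). lra. }
    assert (0 <= eta / (2 * al)) by (apply Rdiv_le_0_compat; lra).
    assert ((eta / (2 * al)) ^ 2 <= v ^ 2) by (apply pow_incr; lra).
    assert (q * (eta / (2 * al)) ^ 2 <= q * v ^ 2) by (apply Rmult_le_compat_l; lra).
    lra.
  - assert (HF : eta / 2 < Fv us u) by lra.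
    destruct (Rlt_le_dec u (us / 2)) as [Hu2 | Hu2].
    + assert (us ^ 2 / 4 <= (u - us) ^ 2) by nra.
      assert (p * Rmin (us ^ 2 / 4) (us * eta / 4) <= p * (u - us) ^ 2).
      { apply Rmult_le_compat_l; lra. }
      lra.
    + assert (HU := F_upper us u Hus Hu).
      assert (Hx : eta / 2 * u < (u - us) ^ 2).
      { assert (eta / 2 < (u - us) ^ 2 / u) by lra.
        apply (Rmult_lt_compat_r u) in H2; [|lra].
        replace ((u - us) ^ 2 / u * u) with ((u - us) ^ 2) in H2 by (field; lra). exact H2. }
      assert (us * eta / 4 <= (u - us) ^ 2) by nra.
      assert (p * Rmin (us ^ 2 / 4) (us * eta / 4) <= p * (u - us) ^ 2).
      { apply Rmult_le_compat_l; lra. }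
      lra.
Qed.

Lemma attract (V D : R -> R) c eta : 0 < c -> 0 < eta ->
  (forall t, 0 <= t -> is_derive V t (D t)) ->
  (forall t, 0 <= t -> D t <= 0) ->
  (forall t, 0 <= t -> eta <= V t -> D t <= - c) ->
  (forall t, 0 <= t -> 0 <= V t) ->
  exists T, 0 <= T /\ forall t, T <= t -> V t < eta.
Proof.
  intros Hc He Hd Hn Hdc Hp.
  assert (Hmono : forall s t, 0 <= s -> s <= t -> V t <= V s).
  { intros s t Hs Hst. apply (nonincr V D s t Hst).
    intros; apply Hd; lra. intros; apply Hn; lra. }
  assert (HV0 := Hp 0 (Rle_refl 0)).
  set (T := V 0 / c + 1).
  assert (HT : 0 <= T) by (unfold T; assert (0 <= V 0 / c) by (apply Rdiv_le_0_compat; lra); lra).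
  exists T. split; auto.
  destruct (Rlt_le_dec (V T) eta) as [Hlt | Hge].
  - intros t Ht. eapply Rle_lt_trans; [apply Hmono|]; eauto.
  - exfalso.
    assert (H := nonincr (fun s => V s + c * s) (fun s => D s + c) 0 T HT).
    assert (V T + c * T <= V 0 + c * 0).
    { apply H.
      - intros t Ht. apply (is_derive_plus V (fun s => c * s) t (D t) c).
        apply Hd; lra.
        auto_derive; auto; ring.
      - intros t Ht. assert (eta <= V t) by (assert (V T <= V t) by (apply Hmono; lra); lra).
        assert (D t <= - c) by (apply Hdc; lra). lra. }
    assert (c * T = V 0 + c) by (unfold T; field; lra).
    lra.
Qed.
Lemma sqrt_lt_sq X d : 0 <= X -> sqrt X < d -> X < d ^ 2.
Proof.
  intros HX H. assert (0 <= sqrt X) by apply sqrt_pos.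
  rewrite <- (sqrt_sqrt X HX). nra.
Qed.

Lemma dist_small x y e : Rabs x < e / 2 -> 0 <= y -> y < e / 2 -> sqrt (x ^ 2 + y ^ 2) < e.
Proof.
  intros Hx Hy0 Hy.
  assert (0 <= Rabs x) by apply Rabs_pos.
  assert (x ^ 2 = Rabs x ^ 2) by (unfold Rabs; destruct (Rcase_abs x); ring).
  assert (Hlt : x ^ 2 + y ^ 2 < e ^ 2) by nra.
  assert (0 < e) by lra.
  rewrite <- (sqrt_pow2 e) by lra.
  apply sqrt_lt_1_alt. split. nra. exact Hlt.
Qed.

Lemma sol_pos a1 a2 b1 b2 c1 c2 k u v : 0 <= k ->
  is_solution a1 a2 b1 b2 c1 c2 k u v -> 0 < u 0 -> 0 < v 0 ->
  forall t, 0 <= t -> 0 < u t /\ 0 < v t.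
Proof.
  intros Hk Hs Hu0 Hv0.
  assert (Hcu : forall t, 0 <= t -> continuity_pt u t).
  { intros t Ht. exact (deriv_cont_pt _ _ _ (proj1 (Hs t Ht))). }
  assert (Hcv : forall t, 0 <= t -> continuity_pt v t).
  { intros t Ht. exact (deriv_cont_pt _ _ _ (proj2 (Hs t Ht))). }
  assert (Hu : forall t, 0 <= t -> 0 < u t).
  { apply (pos_lemma u (fun t => a1 - b1 * u t - c1 * v t)); auto.
    - intros t Ht. destruct (Hs t Ht) as [H1 _].
      replace (u t * (a1 - b1 * u t - c1 * v t)) with (f_u a1 b1 c1 (u t) (v t)) by (unfold f_u; ring).
      exact H1.
    - intros t Ht.
      apply (continuity_pt_minus (fun t => a1 - b1 * u t) (fun t => c1 * v t)).
      apply (continuity_pt_minus (fun t => a1) (fun t => b1 * u t)).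
      apply continuity_pt_const. intros x y; reflexivity.
      apply (continuity_pt_scal u). auto.
      apply (continuity_pt_scal v). auto. }
  assert (Hv : forall t, 0 <= t -> 0 < v t).
  { apply (pos_lemma v (fun t => a2 / (1 + k * u t) - b2 * v t - c2 * u t)); auto.
    - intros t Ht. destruct (Hs t Ht) as [_ H1].
      assert (0 < u t) by auto.
      replace (v t * (a2 / (1 + k * u t) - b2 * v t - c2 * u t)) with (f_v a2 b2 c2 k (u t) (v t)).
      exact H1. unfold f_v. field. nra.
    - intros t Ht. assert (0 < u t) by auto.
      apply (continuity_pt_minus (fun t => a2 / (1 + k * u t) - b2 * v t) (fun t => c2 * u t)).
      apply (continuity_pt_minus (fun t => a2 / (1 + k * u t)) (fun t => b2 * v t)).
      apply (continuity_pt_div (fun t => a2) (fun t => 1 + k * u t)).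
      apply continuity_pt_const. intros x y; reflexivity.
      apply (continuity_pt_plus (fun t => 1) (fun t => k * u t)).
      apply continuity_pt_const. intros x y; reflexivity.
      apply (continuity_pt_scal u). auto. nra.
      apply (continuity_pt_scal v). auto.
      apply (continuity_pt_scal u). auto. }
  intros t Ht; split; auto.
Qed.

Lemma V_deriv us al (u v : R -> R) t du dv : is_derive u t du -> is_derive v t dv -> 0 < u t ->
  is_derive (fun s => Fv us (u s) + al * v s) t ((1 - us / u t) * du + al * dv).
Proof.
  intros Hu Hv Hp. unfold Fv. auto_derive.
  - repeat split; auto; eexists; eauto.
  - replace (Derive (fun x : R => u x) t) with du by (symmetry; apply is_derive_unique; exact Hu).
    replace (Derive (fun x : R => v x) t) with dv by (symmetry; apply is_derive_unique; exact Hv).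
    field. lra.
Qed.

Theorem mainTheorem1 (a1 a2 b1 b2 c1 c2 k : R) :
  0 < a1 -> 0 < a2 -> 0 < b1 -> 0 < b2 -> 0 < c1 -> 0 < c2 -> 0 <= k ->
  c2 / b1 < a2 / a1 -> a2 / a1 < b2 / c1 ->
  b1 * b2 - c1 * c2 > 0 ->
  b2 * b1 > 2 * c1 * c2 ->
  k > (b1 ^ 2 * a2 - a1 * c2 * b1) / (a1 ^ 2 * c2) ->
  GAS a1 a2 b1 b2 c1 c2 k (a1 / b1) 0.
Proof.
  intros Ha1 Ha2 Hb1 Hb2 Hc1 Hc2 Hk H1 H2 H3 H4 H5.
  assert (Hw : a2 * c1 < a1 * b2).
  { assert (X : a2 / a1 * (a1 * c1) < b2 / c1 * (a1 * c1)) by (apply Rmult_lt_compat_r; nra).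
    replace (a2 / a1 * (a1 * c1)) with (a2 * c1) in X by (field; lra).
    replace (b2 / c1 * (a1 * c1)) with (a1 * b2) in X by (field; lra). exact X. }
  set (us := a1 / b1).
  assert (Hus : 0 < us) by (unfold us; apply Rdiv_lt_0_compat; lra).
  assert (Hkc : a2 <= c2 * us * (1 + k * us)).
  { assert (E : (b1 ^ 2 * a2 - a1 * c2 * b1) = (b1 ^ 2 * a2 - a1 * c2 * b1) / (a1 ^ 2 * c2) * (a1 ^ 2 * c2))
      by (field; split; lra).
    assert (Hx : b1 ^ 2 * a2 - a1 * c2 * b1 < k * (a1 ^ 2 * c2)).
    { rewrite E. apply Rmult_lt_compat_r. assert (0 < a1 ^ 2) by (apply pow_lt; lra). nra. lra. }
    assert (E2 : c2 * us * (1 + k * us) = (c2 * a1 * b1 + c2 * k * a1 ^ 2) / b1 ^ 2) by (unfold us; field; lra).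
    rewrite E2. apply (Rmult_le_reg_r (b1 ^ 2)). apply pow_lt; lra.
    unfold Rdiv. rewrite Rmult_assoc, Rinv_l. lra. apply pow_nonzero; lra. }
  set (al := alc a1 a2 b1 c1).
  assert (Hal : 0 < al) by (unfold al, alc; apply Rdiv_lt_0_compat; nra).
  destruct (sig_bounds a1 a2 b2 c1) as [Hr [Hs0 Hs1]]; auto.
  set (p := b1 * sig a1 a2 b2 c1). set (q := sig a1 a2 b2 c1 * c1 ^ 2 / b1).
  assert (Hp : 0 < p) by (unfold p; nra).
  assert (Hq : 0 < q) by (unfold q; apply Rdiv_lt_0_compat; [apply Rmult_lt_0_compat; [lra| apply pow_lt; lra]|lra]).
  assert (Lyap : forall u v, is_solution a1 a2 b1 b2 c1 c2 k u v -> 0 < u 0 -> 0 < v 0 ->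
    (forall t, 0 <= t -> 0 < u t /\ 0 < v t) /\
    forall t, 0 <= t ->
      is_derive (fun s => Fv us (u s) + al * v s) t
        ((1 - us / u t) * f_u a1 b1 c1 (u t) (v t) + al * f_v a2 b2 c2 k (u t) (v t)) /\
      (1 - us / u t) * f_u a1 b1 c1 (u t) (v t) + al * f_v a2 b2 c2 k (u t) (v t)
        <= - (p * (u t - us) ^ 2 + q * v t ^ 2)).
  { intros u v Hs Hu0 Hv0.
    assert (Hpos := sol_pos a1 a2 b1 b2 c1 c2 k u v Hk Hs Hu0 Hv0).
    split; auto. intros t Ht. destruct (Hpos t Ht) as [Hut Hvt].
    destruct (Hs t Ht) as [Hdu Hdv]. split.
    - apply V_deriv; auto.
    - assert (K := key a1 a2 b1 b2 c1 c2 k (u t) (v t) Ha1 Ha2 Hb1 Hb2 Hc1 Hc2 Hk Hw Hkc Hut Hvt).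
      replace ((1 - us / u t) * f_u a1 b1 c1 (u t) (v t) + al * f_v a2 b2 c2 k (u t) (v t)) with
        ((u t - a1 / b1) * (a1 - b1 * u t - c1 * v t)
         + alc a1 a2 b1 c1 * (a2 * v t / (1 + k * u t) - b2 * v t ^ 2 - c2 * u t * v t)).
      exact K.
      unfold f_u, f_v, us, al. field. repeat split; try lra; nra. }
  assert (Mono : forall u v, is_solution a1 a2 b1 b2 c1 c2 k u v -> 0 < u 0 -> 0 < v 0 ->
     forall t, 0 <= t -> Fv us (u t) + al * v t <= Fv us (u 0) + al * v 0).
  { intros u v Hs Hu0 Hv0 t Ht. destruct (Lyap u v Hs Hu0 Hv0) as [Hpos HL].
    apply (nonincr (fun s => Fv us (u s) + al * v s)
      (fun t => (1 - us / u t) * f_u a1 b1 c1 (u t) (v t) + al * f_v a2 b2 c2 k (u t) (v t)) 0 t Ht).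
    - intros s Hs'. apply (proj1 (HL s (proj1 Hs'))).
    - intros s Hs'. eapply Rle_trans. apply (proj2 (HL s (proj1 Hs'))).
      assert (0 <= p * (u s - us) ^ 2) by (apply Rmult_le_pos; [lra | apply pow2_ge_0]).
      assert (0 <= q * v s ^ 2) by (apply Rmult_le_pos; [lra | apply pow2_ge_0]).
      lra. }
  split.
  - intros eps Heps.
    set (eta := etaf us al eps).
    assert (Heta : 0 < eta) by (apply etaf_pos; auto).
    exists (Rmin (us / 2) (eta / (1 + al))). split.
    { apply Rmin_pos. lra. apply Rdiv_lt_0_compat; lra. }
    intros u v Hs Hu0 Hv0 Hd t Ht.
    set (d := Rmin (us / 2) (eta / (1 + al))) in *.
    assert (Hd1 : d <= us / 2) by apply Rmin_l.
    assert (Hd2 : d <= eta / (1 + al)) by apply Rmin_r.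
    unfold dist2 in Hd.
    apply sqrt_lt_sq in Hd; [| assert (0 <= (u 0 - us) ^ 2) by apply pow2_ge_0;
                               assert (0 <= (v 0 - 0) ^ 2) by apply pow2_ge_0; lra].
    fold us in Hd.
    assert (0 < d) by (unfold d; apply Rmin_pos; [lra | apply Rdiv_lt_0_compat; lra]).
    assert (Hx2 : (u 0 - us) ^ 2 < d ^ 2) by (assert (0 <= (v 0 - 0) ^ 2) by apply pow2_ge_0; lra).
    assert (Hv2 : v 0 < d) by (assert (0 <= (u 0 - us) ^ 2) by apply pow2_ge_0; nra).
    assert (Hu0' : us / 2 < u 0) by nra.
    assert (HF0 := F_upper us (u 0) Hus Hu0).
    assert (Hq1 : (u 0 - us) ^ 2 / u 0 <= (u 0 - us) ^ 2 / (us / 2)).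
    { apply Rmult_le_compat_l. apply pow2_ge_0. apply Rinv_le_contravar; lra. }
    assert (Hq2 : (u 0 - us) ^ 2 / (us / 2) < d).
    { apply (Rmult_lt_reg_r (us / 2)). lra.
      replace ((u 0 - us) ^ 2 / (us / 2) * (us / 2)) with ((u 0 - us) ^ 2) by (field; lra). nra. }
    assert (HV0 : Fv us (u 0) + al * v 0 < eta).
    { assert (al * v 0 < al * d) by nra.
      assert (d * (1 + al) <= eta).
      { apply (Rmult_le_compat_r (1 + al)) in Hd2; [|lra].
        replace (eta / (1 + al) * (1 + al)) with eta in Hd2 by (field; lra). exact Hd2. }
      lra. }
    assert (HVt := Mono u v Hs Hu0 Hv0 t Ht).
    destruct (sol_pos a1 a2 b1 b2 c1 c2 k u v Hk Hs Hu0 Hv0 t Ht) as [Hut Hvt].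
    assert (HVlt : Fv us (u t) + al * v t < eta) by lra.
    destruct (smallV us al eps (u t) (v t) Hus Hal Heps Hut Hvt HVlt) as [Ha Hb].
    unfold dist2. fold us. replace (v t - 0) with (v t) by ring.
    apply dist_small; auto; lra.
  - intros u v Hs Hu0 Hv0.
    destruct (Lyap u v Hs Hu0 Hv0) as [Hpos HL].
    assert (Ev : forall eps, 0 < eps -> exists T, forall t, T < t ->
       Rabs (u t - us) < eps /\ v t < eps /\ 0 < v t).
    { intros eps Heps.
      set (eta := etaf us al eps).
      assert (Heta : 0 < eta) by (apply etaf_pos; auto).
      destruct (attract (fun s => Fv us (u s) + al * v s)
        (fun t => (1 - us / u t) * f_u a1 b1 c1 (u t) (v t) + al * f_v a2 b2 c2 k (u t) (v t))
        (ccf us al p q eta) eta) as [T [HT0 HT]].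
      + apply ccf_pos; auto.
      + auto.
      + intros t Ht. apply (proj1 (HL t Ht)).
      + intros t Ht. eapply Rle_trans. apply (proj2 (HL t Ht)).
        assert (0 <= p * (u t - us) ^ 2) by (apply Rmult_le_pos; [lra | apply pow2_ge_0]).
        assert (0 <= q * v t ^ 2) by (apply Rmult_le_pos; [lra | apply pow2_ge_0]).
        lra.
      + intros t Ht He. destruct (Hpos t Ht) as [Hut Hvt].
        assert (Dc := decrease us al p q eta (u t) (v t) Hus Hal Hp Hq Heta Hut Hvt He).
        assert (HL2 := proj2 (HL t Ht)). simpl in *. lra.
      + intros t Ht. destruct (Hpos t Ht) as [Hut Hvt].
        assert (HF := F_nonneg us (u t) Hus Hut). simpl. nra.
      + exists T. intros t Ht. destruct (Hpos t ltac:(lra)) as [Hut Hvt].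
        assert (HVt := HT t ltac:(lra)). simpl in HVt.
        destruct (smallV us al eps (u t) (v t) Hus Hal Heps Hut Hvt HVt). split; [|split]; auto; lra. }
    split.
    + apply is_lim_spec. intro eps. destruct (Ev eps (cond_pos eps)) as [T HT].
      exists T. intros t Ht. apply HT; auto.
    + apply is_lim_spec. intro eps. destruct (Ev eps (cond_pos eps)) as [T HT].
      exists T. intros t Ht. destruct (HT t Ht) as [_ [A B]].
      rewrite Rminus_0_r, Rabs_pos_eq; lra.
Qed.
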